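(* A Boolean function $f:\{0,1\}^n\to\{0,1\}^m$ is fully balanced if and only if its image $\operatorname{img}(f)$ is an affine subspace of $\mathbb{F}_2^m$ and the fibre size $\#f^{-1}(\mathbf{w})$ is the same for every $\mathbf{w}\in\operatorname{img}(f)$.
   Context: Strings in $\{0,1\}^k$ are identified with vectors of $\mathbb{F}_2^k$; $\mathbf{a}\cdot\mathbf{b}=\bigoplus_i a_ib_i$ (mod 2). For $\mathbf{y}\in\{0,1\}^m$, $f$ is $\mathbf{y}$-balanced if $f(\mathbf{x})\cdot\mathbf{y}=0$ for exactly half of the $\mathbf{x}\in\{0,1\}^n$ and $=1$ for the other half, and $\mathbf{y}$-constant if $f(\mathbf{x})\cdot\mathbf{y}$ is the same for all $\mathbf{x}$. $f$ is fully balanced if for every $\mathbf{y}\in\{0,1\}^m$, $f$ is either $\mathbf{y}$-balanced or $\mathbf{y}$-constant. *)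

(* Defs.v *)
From HB Require Import structures.
From mathcomp Require Import all_boot all_order all_algebra.
Set Implicit Arguments. Unset Strict Implicit. Unset Printing Implicit Defensive.
Import GRing.Theory.
Local Open Scope ring_scope.

Notation bvec k := 'rV['F_2]_k.

Definition dotF2 (k : nat) (a b : bvec k) : 'F_2 := \sum_(i < k) a 0 i * b 0 i.

Definition y_balanced (n m : nat) (f : bvec n -> bvec m) (y : bvec m) : Prop :=
  (2 * #|[set x : bvec n | dotF2 (f x) y == 0%R]| = 2 ^ n)%N /\
  (2 * #|[set x : bvec n | dotF2 (f x) y == 1%R]| = 2 ^ n)%N.

Definition y_constant (n m : nat) (f : bvec n -> bvec m) (y : bvec m) : Prop :=
  forall x x' : bvec n, dotF2 (f x) y = dotF2 (f x') y.

Definition fully_balanced (n m : nat) (f : bvec n -> bvec m) : Prop :=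
  forall y : bvec m, y_balanced f y \/ y_constant f y.

Definition img (n m : nat) (f : bvec n -> bvec m) : {set bvec m} :=
  [set f x | x in [set: bvec n]].

Definition affine_subspace (m : nat) (S : {set bvec m}) : Prop :=
  exists (a : bvec m) (U : {vspace bvec m}), S = [set a + u | u in [set u | u \in U]].

(* Main.v *)
Require Import Defs.
From HB Require Import structures.
From mathcomp Require Import all_boot all_order all_algebra.
From mathcomp Require Import zify.
Import GRing.Theory Num.Theory.
Local Open Scope ring_scope.

Lemma F2_cases (b : 'F_2) : b = 0 \/ b = 1.
Proof. case: b => [[|[|//]]] ?; [left|right]; exact: val_inj. Qed.

Definition chi (b : 'F_2) : int := (-1) ^+ (nat_of_ord b).

Lemma chi0 : chi 0 = 1. Proof. by []. Qed.
Lemma chi1 : chi 1 = -1. Proof. by []. Qed.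

Lemma chiD a b : chi (a + b) = chi a * chi b.
Proof. by case: (F2_cases a) => ->; case: (F2_cases b) => ->. Qed.

Lemma chiB a b : chi (a - b) = chi a * chi b.
Proof. by case: (F2_cases a) => ->; case: (F2_cases b) => ->. Qed.

Lemma chi_sq a : chi a * chi a = 1.
Proof. by case: (F2_cases a) => ->. Qed.

Lemma dotDl k (a b y : bvec k) : dotF2 (a + b) y = dotF2 a y + dotF2 b y.
Proof. by rewrite /dotF2 -big_split; apply: eq_bigr => i _; rewrite mxE mulrDl. Qed.

Lemma dotDr k (a b y : bvec k) : dotF2 y (a + b) = dotF2 y a + dotF2 y b.
Proof. by rewrite /dotF2 -big_split; apply: eq_bigr => i _; rewrite mxE mulrDr. Qed.

Lemma dotBl k (a b y : bvec k) : dotF2 (a - b) y = dotF2 a y - dotF2 b y.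
Proof. by rewrite /dotF2 -sumrB; apply: eq_bigr => i _; rewrite !mxE mulrBl. Qed.

Lemma dot0l k (y : bvec k) : dotF2 0 y = 0.
Proof. by rewrite /dotF2 big1 // => i _; rewrite mxE mul0r. Qed.

Lemma dot_delta k (z : bvec k) i : dotF2 z (delta_mx 0 i) = z 0 i.
Proof.
rewrite /dotF2 (bigD1 i) //= big1 ?addr0; first by rewrite mxE !eqxx mulr1.
by move=> j /negbTE ji; rewrite mxE ji andbF mulr0.
Qed.

Lemma card_bvec k : #|{: bvec k}| = (2 ^ k)%N.
Proof. by rewrite card_mx card_Fp // mul1n. Qed.

Lemma int_self_opp (s : int) : s = - s -> s = 0.
Proof. move=> h; have: s *+ 2 == 0 by rewrite mulr2n {2}h subrr.
by rewrite mulrn_eq0 => /eqP. Qed.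

Lemma fourier k (z : bvec k) :
  \sum_(y : bvec k) chi (dotF2 z y) = if z == 0 then (2 ^ k)%N%:Z else 0.
Proof.
case: eqP => [->|/eqP nz].
  rewrite (eq_bigr (fun _ => 1)) => [|y _]; last by rewrite dot0l.
  by rewrite sumr_const card_bvec pmulrn intz.
have [i zi] : exists i, z 0 i != 0.
  apply/existsP; apply: contraR nz => /existsPn h; apply/eqP/matrixP => r j.
  by rewrite ord1 mxE; move/negPn/eqP: (h j).
have zi1 : z 0 i = 1 by case: (F2_cases (z 0 i)) zi => ->.
apply: int_self_opp.
rewrite {1}(reindex_inj (addIr (delta_mx 0 i))) /= -sumrN.
by apply: eq_bigr => y _; rewrite dotDr dot_delta zi1 chiD chi1 mulrN1.
Qed.

Lemma card_parts (T : finType) (b : T -> 'F_2) :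
  addn #|[set x | b x == 0]| #|[set x | b x == 1]| = #|T|.
Proof.
rewrite -(cardsC [set x | b x == 0]); congr (_ + _)%N; apply: eq_card => x.
by rewrite !inE; case: (F2_cases (b x)) => ->.
Qed.

Lemma sum_chi_card (T : finType) (b : T -> 'F_2) :
  \sum_x chi (b x) = #|[set x | b x == 0]|%:Z - #|[set x | b x == 1]|%:Z.
Proof.
rewrite (bigID (fun x => b x == 0)) /=.
rewrite (eq_bigr (fun _ => 1)) => [|x /eqP ->]; last by [].
have -> : \sum_(i | b i != 0) chi (b i) = \sum_(i | b i != 0) (-1 : int).
  apply: eq_bigr => x; case: (F2_cases (b x)) => ->; first by rewrite eqxx.
  move=> _; exact: chi1.
rewrite !sumr_const mulNrn !natz; congr (Posz _ - Posz _); apply: eq_card => x;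
  rewrite unfold_in !inE /=; case: (F2_cases (b x)) => -> //.
Qed.

Lemma balanced_iff (T : finType) (b : T -> 'F_2) k : #|T| = (2 ^ k)%N ->
  (muln 2 #|[set x | b x == 0]| = expn 2 k /\ muln 2 #|[set x | b x == 1]| = expn 2 k)
  <-> \sum_x chi (b x) = 0.
Proof.
move=> hT; have hp := card_parts _ b; rewrite hT in hp.
rewrite sum_chi_card; split.
  case=> h0 h1; apply/eqP; rewrite subr_eq0 eqz_nat.
  by rewrite -(@eqn_pmul2l 2) // h0 h1.
move/eqP; rewrite subr_eq0 eqz_nat => /eqP h; rewrite -h in hp *.
by rewrite -hp mul2n -addnn.
Qed.

Lemma fibre_sum n m (f : bvec n -> bvec m) (F : bvec m -> int) :
  \sum_x F (f x) = \sum_w (#|[set x | f x == w]|)%:Z * F w.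
Proof.
rewrite (partition_big f predT) //=; apply: eq_bigr => w _.
rewrite (eq_bigr (fun _ => F w)) => [|x /eqP ->] //.
rewrite sumr_const -mulr_natl natz; congr (Posz _ * _).
by apply: eq_card => x; rewrite unfold_in inE.
Qed.

Lemma dir2 n m (f : bvec n -> bvec m) :
  affine_subspace (img f) ->
  (exists c : nat, forall w, w \in img f -> #|[set x | f x == w]| = c) ->
  fully_balanced f.
Proof.
case=> a [U hI] [c hc] y.
have imgf x : f x \in img f by apply/imsetP; exists x; rewrite ?inE.
have gE w : #|[set x | f x == w]| = if w \in img f then c else 0%N.
  case: ifP => [/hc //| hw]; apply/eqP; rewrite cards_eq0; apply/eqP/setP => x.
  rewrite !inE; apply/negbTE; apply: contraFN hw => /eqP <-; exact: imgf.
have memI w : (w \in img f) = (w - a \in U).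
  rewrite hI; apply/imsetP/idP => [[u]|hu]; first by rewrite inE => hu ->; rewrite (addrC a u) addrK.
  by exists (w - a); [rewrite inE | rewrite addrC subrK].
case: (boolP [forall u : bvec m, (u \in U) ==> (dotF2 u y == 0)]) => hU.
  right=> x x'.
  have key z : z \in img f -> dotF2 z y = dotF2 a y.
    rewrite memI => hz; have := implyP (forallP hU (z - a)) hz.
    by rewrite dotBl subr_eq0 => /eqP.
  by rewrite !key.
left.
have [u0 /andP[hu0 hy]] : exists u0, (u0 \in U) && (dotF2 u0 y != 0).
  by move: hU; rewrite negb_forall => /existsP[u]; rewrite negb_imply => ?; exists u.
have hy1 : dotF2 u0 y = 1 by case: (F2_cases (dotF2 u0 y)) hy => // ->; rewrite eqxx.
apply/(balanced_iff _ (fun x => dotF2 (f x) y) n (card_bvec n)).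
rewrite (fibre_sum n m f (fun w => chi (dotF2 w y))); apply: int_self_opp.
rewrite {1}(reindex_inj (addIr u0)) /= -sumrN; apply: eq_bigr => w _.
rewrite dotDl hy1 chiD chi1 mulrN1 mulrN; congr (- (_ * _)); rewrite !gE !memI.
have -> : w + u0 - a = (w - a) + u0 by rewrite addrAC.
have -> : (w - a + u0 \in U) = (w - a \in U) => //.
apply/idP/idP => h; last by rewrite memvD.
by rewrite -(addrK u0 (w - a)) memvB.
Qed.

Lemma dir1 n m (f : bvec n -> bvec m) :
  fully_balanced f ->
  affine_subspace (img f) /\
  (exists c : nat, forall w, w \in img f -> #|[set x | f x == w]| = c).
Proof.
move=> hf.
pose a := f 0.
pose V := [set y : bvec m | [forall x, dotF2 (f x) y == dotF2 a y]].
have hV0 y : y \notin V -> \sum_x chi (dotF2 (f x) y) = 0.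
  move=> hy; case: (hf y) => [hb|hc].
    by apply/(balanced_iff _ (fun x => dotF2 (f x) y) n (card_bvec n)).
  by exfalso; move/negP: hy; apply; rewrite inE; apply/forallP => x; rewrite (hc x 0).
have hV1 y : y \in V -> \sum_x chi (dotF2 (f x) y) = (2 ^ n)%N%:Z * chi (dotF2 a y).
  rewrite inE => /forallP hy.
  rewrite (eq_bigr (fun _ => chi (dotF2 a y))) => [|x _]; last by rewrite (eqP (hy x)).
  by rewrite sumr_const card_bvec -mulr_natl natz.
have key w : (forall y, y \in V -> dotF2 w y = dotF2 a y) ->
    (2 ^ m * #|[set x | f x == w]|)%N%:Z = \sum_(y in V) (2 ^ n)%N%:Z.
  move=> hw.
  have -> : (2 ^ m * #|[set x | f x == w]|)%N%:Z =
      \sum_x \sum_y chi (dotF2 (f x - w) y).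
    rewrite (eq_bigr (fun x => if f x == w then (2 ^ m)%N%:Z else 0)) => [|x _]; last first.
      by rewrite fourier subr_eq0.
    rewrite -big_mkcond /= sumr_const -mulr_natr natz -PoszM; congr (Posz (_ * _)).
    by apply: eq_card => x; rewrite inE unfold_in.
  rewrite exchange_big /=.
  rewrite (eq_bigr (fun y => chi (dotF2 w y) * \sum_x chi (dotF2 (f x) y))) => [|y _]; last first.
    by rewrite mulr_sumr; apply: eq_bigr => x _; rewrite dotBl chiB mulrC.
  rewrite (bigID (fun y => y \in V)) /=.
  have -> : \sum_(i | i \notin V) chi (dotF2 w i) * \sum_x chi (dotF2 (f x) i) = 0.
    by apply: big1 => i hi; rewrite hV0 // mulr0.
  rewrite addr0; apply: eq_bigr => y hy.
  by rewrite hV1 // (hw y hy) mulrCA chi_sq mulr1.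
have eqc w : (forall y, y \in V -> dotF2 w y = dotF2 a y) ->
    #|[set x | f x == w]| = #|[set x | f x == a]|.
  move=> hw; have := key w hw; rewrite -(key a (fun _ _ => erefl)) => /eqP.
  by rewrite eqz_nat eqn_pmul2l ?expn_gt0 // => /eqP.
have imgf x : f x \in img f by apply/imsetP; exists x; rewrite ?inE.
have fV x y : y \in V -> dotF2 (f x) y = dotF2 a y.
  by rewrite inE => /forallP hy; apply/eqP.
pose M := \matrix_(j < m, i < #|{: bvec m}|)
   (if enum_val i \in V then (enum_val i) 0 j else 0) : 'M['F_2]_(m, #|{: bvec m}|).
pose phi : 'Hom(bvec m, 'rV['F_2]_#|{: bvec m}|) := linfun (mulmxr M).
pose U := lker phi.
have memU u : (u \in U) = [forall y, (y \in V) ==> (dotF2 u y == 0)].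
  rewrite memv_ker /phi lfunE /=; apply/eqP/forallP => [h y|h].
    apply/implyP => hy; have := congr1 (fun A : 'rV['F_2]_#|{: bvec m}| => A 0 (enum_rank y)) h.
    rewrite !mxE => <-; apply/eqP; apply: eq_bigr => j _.
    by rewrite mxE enum_rankK hy.
  apply/matrixP => i j; rewrite ord1 !mxE.
  case: (boolP (enum_val j \in V)) => hj.
    have := implyP (h (enum_val j)) hj; rewrite /dotF2 => /eqP e.
    by apply: (etrans _ e); apply: eq_bigr => k _; rewrite /M mxE hj.
  by rewrite big1 // => k _; rewrite /M mxE (negbTE hj) mulr0.
have condU w : (w - a \in U) -> (forall y, y \in V -> dotF2 w y = dotF2 a y).
  rewrite memU => /forallP h y hy; have := implyP (h y) hy.
  by rewrite dotBl subr_eq0 => /eqP.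
have fU x : f x - a \in U.
  rewrite memU; apply/forallP => y; apply/implyP => hy.
  by rewrite dotBl subr_eq0 (fV x y hy).
split.
  exists a, U; apply/setP => w; apply/imsetP/imsetP.
    case=> x _ ->; exists (f x - a); first by rewrite inE.
    by rewrite addrC subrK.
  case=> u; rewrite inE => hu ->.
  have hau : a + u - a \in U by rewrite (addrC a u) addrK.
  have : #|[set x | f x == a + u]| != 0%N.
    rewrite (eqc _ (condU _ hau)) cards_eq0; apply/set0Pn; exists 0.
    by rewrite inE.
  rewrite cards_eq0 => /set0Pn [x]; rewrite inE => /eqP <-.
  by exists x; rewrite ?inE.
exists #|[set x | f x == a]| => w /imsetP [x _ ->].
by apply: eqc => y hy; apply: fV.
Qed.

Theorem mainTheorem3 (n m : nat) (f : 'rV['F_2]_n -> 'rV['F_2]_m) :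
  fully_balanced f <->
  (affine_subspace (img f) /\
   exists c : nat, forall w, w \in img f -> #|[set x | f x == w]| = c).
Proof.
split; first exact: dir1.
by case=> h1 h2; apply: dir2.
Qed.
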